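(* Let $k\ge3$ be odd, $0\le p\le p_k^\star$ and $\eta>0$. There exists $\varepsilon'=\varepsilon'(p,k,\eta)>0$ such that for every finite graph $G=(V,E)$ without isolated vertices, every round $t$, every configuration $\bar{\mathbf x}$ with $\phi^{(t)}_{\max}\le\varphi^-_{p,k}-\eta$, and every $u\in V$, under the $(k,p,\mathcal B)$-Edge-Majority dynamics, $$\mathbb E\big[\phi_u^{(t+1)}\mid\mathbf X^{(t)}=\bar{\mathbf x}\big]\le(1-\varepsilon')\,\phi^{(t)}_{\max}.$$
   Context: $N(u)$ neighbourhood of $u$, $\delta_u=|N(u)|$. States in $\{\mathcal R,\mathcal B\}$; $\mathbf X^{(t)}$ is the configuration at round $t$, $R^{(t)}$ the $\mathcal R$ nodes, $\phi_u^{(t)}=|N(u)\cap R^{(t)}|/\delta_u$, $\phi^{(t)}_{\max}=\max_u\phi_u^{(t)}$. $(k,p,\mathcal B)$-Edge-Majority: in each round every node $u$ independently samples $k$ neighbours uniformly with replacement; for each sampled $v$, independently, $u$ sees $v$ as $\mathcal B$ with probability $p$ and otherwise sees $v$'s true current state; $u$'s next state is the state seen more often. $F_{p,k}(x)=\Pr[\mathrm{Bin}(k,(1-p)x)\ge(k+1)/2]$. $p_k^\star\in[1/9,1/2)$ is the (unique) value such that for $0\le p<p_k^\star$, $F_{p,k}(x)=x$ on $[0,1]$ has exactly three solutions $0<\varphi^-_{p,k}<\varphi^+_{p,k}$; for $p=p_k^\star$ exactly two, $0$ and $\varphi_{p,k}$, and then $\varphi^-_{p,k}:=\varphi_{p,k}$;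 for $p>p_k^\star$ only $0$. *)

(* Defs.v *)
From HB Require Import structures.
From mathcomp Require Import all_boot all_order all_algebra.
From mathcomp Require Import boolp classical_sets reals.
Set Implicit Arguments. Unset Strict Implicit. Unset Printing Implicit Defensive.
Import Order.TTheory GRing.Theory Num.Theory.
Local Open Scope ring_scope.
Local Open Scope classical_set_scope.

Section EdgeMajority.
Variable R : realType.

Definition Fpk (p : R) (k : nat) (x : R) : R :=
  let q := (1 - p) * x in
  \sum_(j < k.+1 | ((k.+1)./2 <= j)%N) ('C(k, j))%:R * q ^+ j * (1 - q) ^+ (k - j).

Definition pstar (k : nat) : R :=
  sup [set p : R | 0 <= p <= 1 /\ exists x : R, 0 < x <= 1 /\ Fpk p k x = x].

Definition phiminus (p : R) (k : nat) : R :=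
  inf [set x : R | 0 < x <= 1 /\ Fpk p k x = x].

Variable V : finType.
Variable e : rel V.

Definition nbhd (u : V) : {set V} := [set v | e u v].
Definition deg (u : V) : nat := #|nbhd u|.

(* phi_u of a configuration x (true = R, false = B) *)
Definition phi (x : V -> bool) (u : V) : R :=
  (#|[set v in nbhd u | x v]|)%:R / (deg u)%:R.

Definition phimax (x : V -> bool) : R := \big[Num.max/0]_(u : V) phi x u.

(* One sample of node v: a neighbour w (uniform) together with a noise bit b
   (b = true with probability p: the sample is seen as B). *)
Definition sample_weight (p : R) (v : V) (s : V * bool) : R :=
  (if e v s.1 then ((deg v)%:R)^-1 else 0) * (if s.2 then p else 1 - p).

Definition seen_R (x : V -> bool) (s : V * bool) : bool := ~~ s.2 && x s.1.

(* Probability that v is R in the next round, from the k independent samples: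
   v adopts R iff R is seen more often than B (k odd). *)
Definition prob_next_R (p : R) (k : nat) (x : V -> bool) (v : V) : R :=
  \sum_(s : {ffun 'I_k -> V * bool})
     (\prod_(i < k) sample_weight p v (s i)) *
     (if (k < 2 * #|[set i | seen_R x (s i)]|)%N then 1 else 0).

Definition prob_next_config (p : R) (k : nat) (x : V -> bool)
    (y : {ffun V -> bool}) : R :=
  \prod_(v : V) (if y v then prob_next_R p k x v else 1 - prob_next_R p k x v).

Definition exp_next_phi (p : R) (k : nat) (x : V -> bool) (u : V) : R :=
  \sum_(y : {ffun V -> bool}) prob_next_config p k x y * phi y u.

End EdgeMajority.

(* Main.v *)
Require Import Defs.
From HB Require Import structures.
From mathcomp Require Import all_boot all_order all_algebra.
From mathcomp Require Import boolp classical_sets reals.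
From mathcomp Require Import topology normedtype derive.
From mathcomp Require Import lra zify ring.
Import Order.TTheory GRing.Theory Num.Theory.
Local Open Scope ring_scope.
Section Binom.
Variable R : realType.

Lemma sum_card_set (k : nat) (f : nat -> R) :
  \sum_(A : {set 'I_k}) f #|A| = \sum_(j < k.+1) 'C(k, j)%:R * f j.
Proof.
transitivity (\sum_(A : {set 'I_k}) \sum_(j < k.+1 | #|A| == j) f j).
  apply: eq_bigr => A _.
  have hA : (#|A| < k.+1)%N.
    by rewrite ltnS; apply: leq_trans (max_card _) _; rewrite card_ord.
  rewrite (big_pred1 (Ordinal hA)) //= => j; by rewrite eq_sym -val_eqE.
rewrite (exchange_big_dep xpredT) //=; apply: eq_bigr => j _.
have -> : \sum_(A : {set 'I_k} | #|A| == j) f j = \sum_(A in [set A : {set 'I_k} | #|A| == j]) f j.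
  by apply: eq_bigl => A; rewrite inE.
by rewrite sumr_const card_draws card_ord mulr_natl.
Qed.

End Binom.
Section B2.
Variable R : realType.
Lemma binom_ffun (k : nat) (T : finType) (w : T -> R) (P : pred T) (Q : nat -> bool) :
  \sum_(s : {ffun 'I_k -> T}) (\prod_(i < k) w (s i)) * (if Q #|[set i | P (s i)]| then 1 else 0)
  = \sum_(j < k.+1 | Q j) 'C(k,j)%:R * (\sum_t w t * (P t)%:R)^+j
          * (\sum_t w t * (~~ P t)%:R)^+(k-j).
Proof.
set a := \sum_(t : T) w t * (P t)%:R; set b := \sum_(t : T) w t * (~~ P t)%:R.
transitivity (\sum_(s : {ffun 'I_k -> T}) \sum_(A : {set 'I_k})
   (if Q #|A| then 1 else 0) * \prod_(i < k) (w (s i) * ((P (s i) == (i \in A)))%:R)).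
  apply: eq_bigr => s _.
  rewrite (bigD1 [set i | P (s i)]) //= [X in _ = _ + X]big1 ?addr0.
    rewrite big_split /= [X in _ = _ * (_ * X)]big1 ?mulr1 1?mulrC // => i _.
    by rewrite inE eqxx.
  move=> A hA; apply/eqP; rewrite mulf_eq0; apply/orP; right.
  case/boolP: [forall i, P (s i) == (i \in A)] => [/forallP H|/forallPn [i Hi]].
    exfalso; move/negP: hA; apply; apply/eqP/setP => i; by rewrite inE (eqP (H i)).
  apply/prodf_eq0; exists i => //; by rewrite (negbTE Hi) mulr0.
rewrite exchange_big /=.
transitivity (\sum_(A : {set 'I_k}) (if Q #|A| then 1 else 0) * a ^+ #|A| * b ^+ (k - #|A|)).
  apply: eq_bigr => A _; rewrite -mulr_sumr -(bigA_distr_bigA (fun i t => w t * ((P t == (i \in A)))%:R)) /= -mulrA; congr (_ * _).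
  rewrite (bigID (mem A)) /=.
  rewrite (eq_bigr (fun _ => a)); last first.
    by move=> i iA; apply: eq_bigr => t _; rewrite iA eqb_id.
  rewrite [X in _ * X](eq_bigr (fun _ => b)); last first.
    by move=> i iA; apply: eq_bigr => t _; rewrite (negbTE iA) eqbF_neg.
  rewrite prodr_const; congr (_ * _).
  rewrite prodr_const; congr (_ ^+ _).
  have hc := cardsC A; rewrite card_ord in hc.
  transitivity #|~: A|; first by apply: eq_card => i; rewrite inE.
  by rewrite -[X in (X - _)%N]hc addKn.
rewrite (@sum_card_set R k (fun j => (if Q j then 1 else 0) * a ^+ j * b ^+ (k - j))).
rewrite [RHS]big_mkcond /=; apply: eq_bigr => j _.
by case: (Q j); rewrite ?mul0r ?mulr0 ?mul1r ?mulr1 // mulrA.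
Qed.
End B2.
Section B3.
Variable R : realType.

Lemma card_sumR (T : finType) (A : pred T) :
  (#|A|%:R : R) = \sum_(t : T) (if t \in A then 1 else 0).
Proof. by rewrite -big_mkcond /= sumr_const. Qed.

Lemma marg (V : finType) (f : V -> R) (w : V) :
  \sum_(y : {ffun V -> bool}) (\prod_(v : V) (if y v then f v else 1 - f v)) *
     (if y w then 1 else 0) = f w.
Proof.
transitivity (\sum_(y : {ffun V -> bool}) \prod_(v : V)
   (fun v b => (if b then f v else 1 - f v) * (if v == w then (if b then 1 else 0) else 1)) v (y v)).
  apply: eq_bigr => y _; rewrite big_split /=; congr (_ * _).
  by rewrite -big_mkcond big_pred1_eq.
rewrite -(bigA_distr_bigA (fun v b => (if b then f v else 1 - f v) * (if v == w then (if b then 1 else 0) else 1))) /=.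
rewrite (bigD1 w) //= [X in _ * X]big1 ?mulr1.
  by rewrite big_bool /= eqxx mulr1 mulr0 addr0.
move=> v hv; rewrite big_bool /= (negbTE hv) !mulr1; ring.
Qed.

Variable V : finType.
Variable e : rel V.

Lemma exp_next_phi_eq (p : R) k x u :
  exp_next_phi e p k x u =
  ((deg e u)%:R)^-1 * \sum_(w in nbhd e u) prob_next_R e p k x w.
Proof.
rewrite /exp_next_phi.
transitivity (\sum_(y : {ffun V -> bool}) \sum_(w in nbhd e u) ((deg e u)%:R)^-1 *
   (prob_next_config e p k x y * (if y w then 1 else 0))).
  apply: eq_bigr => y _; rewrite /phi card_sumR.
  have -> : \sum_t (if t \in [set v in nbhd e u | y v] then (1:R) else 0)
     = \sum_(w in nbhd e u) (if y w then 1 else 0).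
    rewrite [RHS]big_mkcond /=; apply: eq_bigr => w _; rewrite inE.
    by case: (w \in nbhd e u); case: (y w).
  rewrite -mulr_sumr -mulr_sumr; ring.
rewrite exchange_big /= mulr_sumr; apply: eq_bigr => w _; rewrite -mulr_sumr; congr (_ * _).
exact: marg.
Qed.
End B3.
Section B4.
Variable R : realType.

Lemma sum_ifc (T : finType) (P : pred T) (c : R) :
  \sum_(t : T) (if P t then c else 0) = c * #|P|%:R.
Proof. by rewrite -big_mkcond /= sumr_const mulr_natr. Qed.

Lemma odd_cond k j : odd k -> (k < 2 * j)%N = ((k.+1)./2 <= j)%N.
Proof.
move=> hk; have h := odd_double_half k; rewrite hk in h.
have -> : (k.+1)./2 = (k./2).+1 by rewrite /= uphalf_half hk.
rewrite -[in LHS]h -mul2n; apply/idP/idP; lia.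
Qed.

Variable V : finType.
Variable e : rel V.

Lemma prob_next_R_eq (p : R) k x v :
  (0 < deg e v)%N -> odd k ->
  prob_next_R e p k x v = Fpk p k (phi R e x v).
Proof.
move=> hd hk.
have hc (s : {ffun 'I_k -> V * bool}) : #|[set i | is_true (seen_R x (s i))]%classic| = #|[set i | seen_R x (s i)]|.
  by apply: eq_card => i; rewrite finset.inE unfold_in /in_set /= asboolb.
rewrite /prob_next_R.
under eq_bigr => s _ do rewrite hc.
rewrite (@binom_ffun R k _ (sample_weight e p v) (seen_R x) (fun n => (k < 2 * n)%N)).
set a := \sum_t _ * (seen_R x t)%:R.
set b := \sum_t _ * (~~ seen_R x t)%:R.
have ha : a = (1 - p) * phi R e x v.
  rewrite /a -(pair_bigA _ (fun (w : V) (c : bool) => sample_weight e p v (w, c) * (seen_R x (w, c))%:R)) /=.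
  under eq_bigr => w _ do rewrite big_bool /= /sample_weight /= mulr0 add0r.
  rewrite /phi; set d := (deg e v)%:R; rewrite card_sumR mulr_suml mulr_sumr; apply: eq_bigr => w _.
  rewrite inE /nbhd inE /seen_R /=; case: (e v w); case: (x w) => /=; ring.
have hab : a + b = 1.
  rewrite /a /b -big_split /=.
  transitivity (\sum_(w : V) (if e v w then ((deg e v)%:R : R)^-1 else 0)).
    rewrite -(pair_bigA _ (fun (w : V) (c : bool) => sample_weight e p v (w, c) * (seen_R x (w, c))%:R + sample_weight e p v (w, c) * (~~ seen_R x (w, c))%:R)) /=.
    apply: eq_bigr => w _; rewrite big_bool /sample_weight /seen_R /=.
    case: (e v w); case: (x w) => /=; ring.
  rewrite sum_ifc.
  have -> : #|(fun w => e v w)| = deg e v by apply: eq_card => w; rewrite /nbhd inE.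
  by rewrite mulVf // pnatr_eq0 -lt0n.
have hb : b = 1 - a by rewrite -hab addrC addKr.
rewrite /Fpk hb ha; apply: eq_bigl => j; exact: odd_cond.
Qed.
End B4.
Section B5.
Import numFieldNormedType.Exports.
Local Open Scope classical_set_scope.
Variable R : realType.

Definition Gp (p : R) (k : nat) : {poly R} :=
  \sum_(j < k.+1 | ((k.+1)./2 <= j)%N)
     ('C(k, j)%:R * (1 - p) ^+ j) *: ('X^(j.-1) * (1 - (1 - p) *: 'X) ^+ (k - j)).

Lemma Gp_evalE (p x : R) k :
  (Gp p k).[x] = \sum_(j < k.+1 | ((k.+1)./2 <= j)%N)
     ('C(k, j)%:R * (1 - p) ^+ j) * (x ^+ (j.-1) * (1 - (1 - p) * x) ^+ (k - j)).
Proof.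
rewrite /Gp horner_sum; apply: eq_bigr => j _.
by rewrite !hornerE.
Qed.

Lemma Gp_eval (p x : R) k : (1 <= k)%N -> x * (Gp p k).[x] = Fpk p k x.
Proof.
move=> hk; rewrite Gp_evalE /Fpk mulr_sumr; apply: eq_bigr => j hj.
have hj1 : (0 < j)%N.
  apply: leq_trans hj; have := odd_double_half k; rewrite /= uphalf_half; lia.
rewrite -(prednK hj1) succnK !exprS exprMn; ring.
Qed.

Lemma Gp_0 (p : R) k : (3 <= k)%N -> (Gp p k).[0] = 0.
Proof.
move=> hk; rewrite Gp_evalE big1 // => j hj.
have hj1 : (0 < j.-1)%N.
  have: (2 <= j)%N.
    apply: leq_trans hj; have := odd_double_half k; rewrite /= uphalf_half; lia.
  lia.
by rewrite expr0n (negbTE (lt0n_neq0 hj1)) mul0r mulr0.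
Qed.

Lemma key (p c : R) k : (3 <= k)%N -> c < phiminus p k ->
  exists eps : R, 0 < eps /\ eps <= 1 /\
    forall x, 0 <= x -> x <= c -> x <= 1 -> Fpk p k x <= (1 - eps) * x.
Proof.
move=> hk hc.
set b := Num.min c 1.
have hk1 : (1 <= k)%N by lia.
have xb x : x <= c -> x <= 1 -> x <= b by move=> h1 h2; rewrite /b le_min h1 h2.
case: (ltP b 0) => hb.
  exists 1; split; first lra; split; first lra.
  move=> x h0 h1 h2; have := xb x h1 h2; lra.
have cG : {within `[0, b], continuous (horner (Gp p k))}.
  exact/continuous_subspaceT/continuous_horner.
have [m hm mmax] := EVT_max hb cG.
move: hm; rewrite in_itv /= => /andP [hm0 hmb].
have hG1 : (Gp p k).[m] < 1.
  rewrite ltNge; apply/negP => hge.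
  have cG' : {within `[0, m], continuous (horner (Gp p k))}.
    exact/continuous_subspaceT/continuous_horner.
  have hv : Num.min (Gp p k).[0] (Gp p k).[m] <= 1 <= Num.max (Gp p k).[0] (Gp p k).[m].
    rewrite Gp_0 // ge_min le_max hge orbT andbT; apply/orP; left; lra.
  have [y hy hGy] := IVT hm0 cG' hv.
  move: hy; rewrite in_itv /= => /andP [hy0 hym].
  have hy0' : 0 < y.
    rewrite lt_neqAle hy0 andbT; apply/eqP => hy; move: hGy; rewrite -hy Gp_0 //; lra.
  have hFy : Fpk p k y = y by rewrite -Gp_eval // hGy mulr1.
  have hb1 : b <= 1 by rewrite /b ge_min lexx orbT.
  have hbc : b <= c by rewrite /b ge_min lexx.
  have hinf : phiminus p k <= y.
    rewrite /phiminus; apply: (ge_inf _) => /=.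
      by exists 0 => z [/andP [hz _] _]; lra.
    split => //; apply/andP; split => //; lra.
  lra.
exists (1 - Num.max (Gp p k).[m] 0); split.
  have : Num.max (Gp p k).[m] 0 < 1 by rewrite gt_max hG1 ltr01.
  lra.
split.
  have : 0 <= Num.max (Gp p k).[m] 0 by rewrite le_max lexx orbT.
  lra.
move=> x h0 h1 h2.
rewrite -Gp_eval // opprB addrC subrK mulrC.
apply: ler_wpM2r => //.
have : (Gp p k).[x] <= (Gp p k).[m].
  apply: mmax; rewrite in_itv /= h0 /=; exact: xb.
move=> h; apply: (le_trans h); by rewrite le_max lexx.
Qed.
End B5.

Theorem lemma5p13 (R : realType) (k : nat) (p eta : R) :
  (3 <= k)%N -> odd k ->
  0 <= p -> p <= pstar R k -> 0 < eta ->
  exists eps' : R, 0 < eps' /\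
    forall (V : finType) (e : rel V),
      symmetric e -> irreflexive e ->
      (forall u : V, exists v : V, e u v) ->
      forall (x : V -> bool),
        phimax R e x <= phiminus p k - eta ->
        forall u : V,
          exp_next_phi e p k x u <= (1 - eps') * phimax R e x.
Proof.
move=> hk hodd hp hps heta.
have hc : phiminus p k - eta < phiminus p k by lra.
have [eps [he0 [he1 hF]]] := @key R p _ k hk hc.
exists eps; split => //.
move=> V e hsym hirr hnb x hmax u.
have hdeg w : (0 < deg e w)%N.
  have [v hv] := hnb w; apply/card_gt0P; exists v; by rewrite /nbhd inE.
have phi_ge0 w : 0 <= phi R e x w by rewrite /phi divr_ge0 ?ler0n.
have phi_le1 w : phi R e x w <= 1.
  rewrite /phi ler_pdivrMr ?ltr0n // mul1r ler_nat.
  rewrite /deg; apply: subset_leq_card; apply/fintype.subsetP => y; by rewrite inE => /andP [].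
have phi_lemax w : phi R e x w <= phimax R e x by exact: le_bigmax.
rewrite exp_next_phi_eq.
have hb : forall w, w \in nbhd e u -> prob_next_R e p k x w <= (1 - eps) * phimax R e x.
  move=> w _; rewrite prob_next_R_eq //.
  apply: (le_trans (hF _ (phi_ge0 w) (le_trans (phi_lemax w) hmax) (phi_le1 w))).
  apply: ler_wpM2l; [lra | exact: phi_lemax].
apply: (le_trans (ler_wpM2l _ (ler_sum _ hb))); first by rewrite invr_ge0 ler0n.
rewrite sumr_const -[X in _ * X]mulr_natr mulrC -mulrA mulfV ?mulr1 //.
by rewrite pnatr_eq0 -lt0n; exact: hdeg.
Qed.
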